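(* Let $d\ge2$ and let $p_1,\dots,p_{d+1}$ be the vertices of a regular $d$-simplex inscribed in the unit sphere centered at the origin of $\mathbb{R}^d$. For each $i$, let $q_i$ be the point on the ray from the origin through the circumcenter of the facet $[p_1,\dots,p_{i-1},p_{i+1},\dots,p_{d+1}]$ at distance $\rho$ from the origin, where $\rho>20d$. For each $i\in\{1,\dots,d+1\}$, let $a$ and $\rho'$ be the center and radius of the circumsphere of the $d$-simplex $[p_1,\dots,p_{i-1},q_i,p_{i+1},\dots,p_{d+1}]$. Then $\|a\|-\rho'>\frac{1}{10d}$. *)

(* Defs.v *)
From HB Require Import structures.
From mathcomp Require Import all_boot all_order all_algebra.
From mathcomp Require Import reals.
Set Implicit Arguments. Unset Strict Implicit. Unset Printing Implicit Defensive.
Import Order.TTheory GRing.Theory Num.Theory.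
Local Open Scope ring_scope.

Definition enorm (R : realType) (d : nat) (v : 'rV[R]_d) : R :=
  Num.sqrt (\sum_(j < d) v 0 j ^+ 2).

Definition regular_simplex_in_unit_sphere (R : realType) (d : nat)
  (p : 'I_d.+1 -> 'rV[R]_d) : Prop :=
  (forall i, enorm (p i) = 1) /\
  exists s : R, 0 < s /\ forall i j, i != j -> enorm (p i - p j) = s.

Definition in_facet_affine_hull (R : realType) (d : nat)
  (p : 'I_d.+1 -> 'rV[R]_d) (i : 'I_d.+1) (c : 'rV[R]_d) : Prop :=
  exists w : 'I_d.+1 -> R,
    w i = 0 /\ \sum_(j < d.+1) w j = 1 /\ c = \sum_(j < d.+1) w j *: p j.

Definition facet_circumcenter (R : realType) (d : nat)
  (p : 'I_d.+1 -> 'rV[R]_d) (i : 'I_d.+1) (c : 'rV[R]_d) : Prop :=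
  in_facet_affine_hull p i c /\
  exists r : R, forall j, j != i -> enorm (c - p j) = r.

Definition replace_vertex (R : realType) (d : nat)
  (p : 'I_d.+1 -> 'rV[R]_d) (i : 'I_d.+1) (q : 'rV[R]_d) : 'I_d.+1 -> 'rV[R]_d :=
  fun j => if j == i then q else p j.

Definition circumsphere (R : realType) (d : nat)
  (v : 'I_d.+1 -> 'rV[R]_d) (a : 'rV[R]_d) (r : R) : Prop :=
  forall j, enorm (a - v j) = r.

(* Main.v *)
Require Import Defs.
From HB Require Import structures.
From mathcomp Require Import all_boot all_order all_algebra.
From mathcomp Require Import reals.
From mathcomp Require Import zify ring lra.
Import Order.TTheory GRing.Theory Num.Theory.
Local Open Scope ring_scope.

Section H.
Set Implicit Arguments. Unset Strict Implicit. Unset Printing Implicit Defensive.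
Variables (R : realType) (d : nat).
Implicit Types (u v w : 'rV[R]_d).

Definition dot u v : R := \sum_k u 0 k * v 0 k.

Lemma dotC u v : dot u v = dot v u.
Proof. by apply: eq_bigr => k _; rewrite mulrC. Qed.

Lemma dotDl u w v : dot (u + w) v = dot u v + dot w v.
Proof. by rewrite /dot -big_split; apply: eq_bigr => k _; rewrite mxE mulrDl. Qed.

Lemma dotZl a u v : dot (a *: u) v = a * dot u v.
Proof. by rewrite /dot mulr_sumr; apply: eq_bigr => k _; rewrite mxE mulrA. Qed.

Lemma dotNl u v : dot (- u) v = - dot u v.
Proof. by rewrite -scaleN1r dotZl mulN1r. Qed.

Lemma dotBl u w v : dot (u - w) v = dot u v - dot w v.
Proof. by rewrite dotDl dotNl. Qed.

Lemma dotDr u w v : dot v (u + w) = dot v u + dot v w.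
Proof. by rewrite dotC dotDl !(dotC v). Qed.
Lemma dotZr a u v : dot v (a *: u) = a * dot v u.
Proof. by rewrite dotC dotZl dotC. Qed.
Lemma dotBr u w v : dot v (u - w) = dot v u - dot v w.
Proof. by rewrite dotC dotBl !(dotC v). Qed.

Lemma dot0l v : dot 0 v = 0.
Proof. by rewrite /dot big1 // => k _; rewrite mxE mul0r. Qed.

Lemma dot_suml n (f : 'I_n -> 'rV[R]_d) v :
  dot (\sum_(j < n) f j) v = \sum_(j < n) dot (f j) v.
Proof.
rewrite /dot (exchange_big _ _ _ predT predT) /=.
by apply: eq_bigr => k _; rewrite summxE mulr_suml.
Qed.

Lemma dot_ge0 v : 0 <= dot v v.
Proof. by apply: sumr_ge0 => k _; rewrite -expr2 sqr_ge0. Qed.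

Lemma enorm2 v : enorm v ^+ 2 = dot v v.
Proof.
rewrite /enorm sqr_sqrtr; last by apply: sumr_ge0 => k _; rewrite sqr_ge0.
by apply: eq_bigr => k _; rewrite expr2.
Qed.

Lemma enormE v : enorm v = Num.sqrt (dot v v).
Proof. by rewrite /enorm; congr Num.sqrt; apply: eq_bigr => k _; rewrite expr2. Qed.

Lemma enorm_ge0 v : 0 <= enorm v.
Proof. exact: sqrtr_ge0. Qed.

Lemma dot_eq0 v : dot v v = 0 -> v = 0.
Proof.
move=> H; apply/rowP => k; rewrite !mxE.
have H0 : forall k, true -> 0 <= v 0 k * v 0 k by move=> j _; rewrite -expr2 sqr_ge0.
have /eqP := @psumr_eq0P _ _ _ _ H0 H k isT.
by rewrite mulf_eq0 orbb => /eqP.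
Qed.

Lemma dep (u : 'I_d.+1 -> 'rV[R]_d) :
  exists l : 'I_d.+1 -> R, (exists j, l j != 0) /\ \sum_j l j *: u j = 0.
Proof.
pose M := \matrix_(j < d.+1, k < d) u j 0 k.
have : kermx M != 0.
  rewrite -mxrank_eq0 mxrank_ker.
  have := rank_leq_col M; rewrite -subn_eq0; lia.
case/rowV0Pn => x /sub_kermxP xM x0.
exists (fun j => x 0 j); split.
  apply/existsP; apply: contraR x0; rewrite negb_exists => /forallP H.
  by apply/eqP/rowP => j; rewrite mxE; apply/eqP; have := H j; rewrite negbK.
apply/rowP => k; rewrite summxE [RHS]mxE.
transitivity (\sum_j x 0 j * M j k).
  by apply: eq_bigr => j _; rewrite !mxE.
by have := congr1 (fun m : 'M_(1, d) => m 0 k) xM; rewrite /= mxE [RHS]mxE.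
Qed.

Lemma sum_gram n (f : 'I_n -> R) k g x :
  \sum_(j < n) f j * (g + (j == k)%:R * x) = g * \sum_j f j + f k * x.
Proof.
rewrite (eq_bigr (fun j => g * f j + (j == k)%:R * (f j * x))); last first.
  by move=> j _; rewrite mulrDr mulrC mulrCA.
rewrite big_split /= -mulr_sumr; congr (_ + _).
rewrite (bigD1 k) //= eqxx mul1r big1 ?addr0 // => j /negbTE ->.
by rewrite mul0r.
Qed.

Lemma gram_eq n (p : 'I_n -> 'rV[R]_d) (g : R) (l : 'I_n -> R) :
  g != 1 -> (forall j k, dot (p j) (p k) = g + (j == k)%:R * (1 - g)) ->
  \sum_j l j *: p j = 0 -> forall k m, l k = l m.
Proof.
move=> g1 G S.
have E k : l k * (1 - g) = - (g * \sum_j l j).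
  have := congr1 (dot ^~ (p k)) S; rewrite /= dot_suml dot0l.
  rewrite (eq_bigr (fun j => l j * (g + (j == k)%:R * (1 - g)))); last first.
    by move=> j _; rewrite dotZl G.
  by rewrite sum_gram => /eqP; rewrite addrC addr_eq0 => /eqP.
move=> k m; apply: (mulIf (_ : 1 - g != 0)); first by rewrite subr_eq0 eq_sym.
by rewrite !E.
Qed.

End H.

Theorem lemma3p18 (R : realType) (d : nat) (p : 'I_d.+1 -> 'rV[R]_d) (rho : R)
  (i : 'I_d.+1) (c q a : 'rV[R]_d) (rho' : R) :
  (2 <= d)%N ->
  regular_simplex_in_unit_sphere p ->
  20 * d%:R < rho ->
  facet_circumcenter p i c ->
  (exists t : R, 0 < t /\ q = t *: c) ->
  enorm q = rho ->
  circumsphere (replace_vertex p i q) a rho' ->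
  (10 * d%:R)^-1 < enorm a - rho'.
Proof.
move=> d2 [pn [s [s0 ps]]] hrho [[w [wi [w1 cdef]]] [r hr]] [t [t0 qdef]] hq hcirc.
set D : R := d%:R.
have D2 : 2 <= D by rewrite /D (ler_nat R 2 d).
have pp j : dot (p j) (p j) = 1 by rewrite -enorm2 pn expr1n.
set g : R := 1 - s^+2 / 2.
have G j k : dot (p j) (p k) = g + (j == k)%:R * (1 - g).
  case: eqVneq => [->|jk]; first by rewrite pp mul1r addrC subrK.
  rewrite mul0r addr0.
  have := ps _ _ jk => /(congr1 (fun x => x ^+ 2)).
  rewrite enorm2 !dotBl !dotBr !pp (dotC (p k)) => E.
  by rewrite /g -E; field.
have g1 : g != 1.
  apply/negP => /eqP H; have := mulr_gt0 s0 s0; rewrite -expr2 /g in H *; lra.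
have [l [[j0 lj0] S]] := dep p.
have Sp : \sum_j p j = 0.
  have E := gram_eq g1 G S.
  have : l j0 *: \sum_j p j = 0.
    rewrite scaler_sumr; apply: etrans S; apply: eq_bigr => j _; by rewrite (E j j0).
  by move/eqP; rewrite scaler_eq0 (negbTE lj0) => /eqP.
have Dg : 1 + D * g = 0.
  have := congr1 (fun x => dot x (p i)) Sp; rewrite /= dot_suml dot0l.
  rewrite (eq_bigr (fun j => 1 * (g + (j == i)%:R * (1 - g)))); last first.
    by move=> j _; rewrite G mul1r.
  rewrite sum_gram sumr_const card_ord -addn1 natrD /D; lra.
have D0 : (0 < d)%N by lia.
pose j1 := lift i (Ordinal D0).
have j1i : j1 != i by rewrite eq_sym neq_lift.
have hw j : j != i -> w j * (1 - g) = (dot c c + 1 - r ^+ 2) / 2 - g.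
  move=> ji; have := hr j ji => /(congr1 (fun x => x ^+ 2)).
  rewrite enorm2 dotBl !dotBr pp (dotC (p j)).
  have -> : dot c (p j) = g + w j * (1 - g).
    rewrite cdef dot_suml.
    rewrite (eq_bigr (fun k => w k * (g + (k == j)%:R * (1 - g)))); last first.
      by move=> k _; rewrite dotZl G.
    by rewrite sum_gram w1 mulr1.
  by move=> E; rewrite -E; field.
pose om := w j1.
have wj j : j != i -> w j = om.
  move=> ji; apply: (mulIf (_ : 1 - g != 0)); first by rewrite subr_eq0 eq_sym.
  by rewrite hw // hw.
have Dom : D * om = 1.
  rewrite -w1 (eq_bigr (fun j => 1 * (om + (j == i)%:R * (- om)))); last first.
    move=> j _; case: (eqVneq j i) => [->|ji]; first by rewrite wi mul1r mul1r subrr.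
    by rewrite wj // mul0r addr0 mul1r.
  rewrite sum_gram sumr_const card_ord -addn1 natrD /D; ring.
have cE : c = - (om *: p i).
  rewrite cdef (bigD1 i) //= wi scale0r add0r.
  transitivity (\sum_(j < d.+1 | j != i) om *: p j).
    by apply: eq_bigr => j ji; rewrite wj.
  rewrite -scaler_sumr -scalerN; congr (_ *: _).
  by move: Sp; rewrite (bigD1 i) //= => /eqP; rewrite addrC addr_eq0 => /eqP.
have DP : 0 < D by lra.
have om0 : 0 < om.
  by rewrite -(pmulr_rgt0 _ DP) Dom ltr01.
have rhoE : rho = t * om.
  rewrite -hq enormE qdef cE.
  have -> : dot (t *: - (om *: p i)) (t *: - (om *: p i)) = (t * om) ^+ 2.
    by rewrite -scaleNr !scalerA !dotZl !dotZr pp; ring.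
  by rewrite sqrtr_sqr ger0_norm // mulr_ge0 // ltW.
have qE : q = - (rho *: p i) by rewrite qdef cE rhoE scalerN scalerA.
have hc j : j != i -> dot (a - p j) (a - p j) = rho' ^+ 2.
  move=> ji; have := hcirc j; rewrite /replace_vertex (negbTE ji).
  by move=> <-; rewrite enorm2.
have hci : dot (a + rho *: p i) (a + rho *: p i) = rho' ^+ 2.
  have := hcirc i; rewrite /replace_vertex eqxx qE opprK.
  by move=> <-; rewrite enorm2.
pose mu := dot a (p j1).
have hmu j : j != i -> dot a (p j) = mu.
  move=> ji; have := hc j ji; have := hc j1 j1i.
  rewrite !dotBl !dotBr !pp (dotC (p j)) (dotC (p j1)) /mu => E1 E2.
  lra.
pose al := dot a (p i).
have alE : al = - (D * mu).
  have := congr1 (fun x => dot a x) Sp.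
  rewrite dotC dot_suml [in RHS]dotC dot0l.
  rewrite (eq_bigr (fun j => 1 * (mu + (j == i)%:R * (al - mu)))); last first.
    move=> j _; rewrite dotC; case: (eqVneq j i) => [->|ji].
      by rewrite mul1r mul1r addrC subrK.
    by rewrite hmu // mul0r addr0 mul1r.
  rewrite sum_gram sumr_const card_ord -addn1 natrD /D => E; lra.
pose v := a - al *: p i.
have hv j : dot v (p j) = 0.
  rewrite /v dotBl dotZl G.
  case: (eqVneq i j) => [<-|ij]; first by rewrite /al (_ : (true%:R : R) = 1) //; ring.
  rewrite mul0r addr0 hmu 1?eq_sym // alE.
  have -> : mu - - (D * mu) * g = mu * (1 + D * g) by ring.
  by rewrite Dg mulr0.
have v0 : v = 0.
  pose u j := if j == i then v else p j.
  have [l2 [[j2 lj2] S2]] := dep u.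
  have li : l2 i * dot v v = 0.
    have := congr1 (fun x => dot x v) S2; rewrite /= dot_suml dot0l.
    rewrite (bigD1 i) //= big1 ?addr0.
      by rewrite dotZl /u eqxx.
    by move=> j ji; rewrite dotZl /u (negbTE ji) dotC hv mulr0.
  apply: dot_eq0; apply/eqP; apply: contraT => vv0.
  have li0 : l2 i = 0.
    by move: li => /eqP; rewrite mulf_eq0 (negbTE vv0) orbF => /eqP.
  pose l' j := if j == i then 0 else l2 j.
  have S' : \sum_j l' j *: p j = 0.
    apply: etrans S2; apply: eq_bigr => j _; rewrite /l' /u.
    by case: eqP => [->|//]; rewrite li0 !scale0r.
  have E := gram_eq g1 G S' j2 i.
  move: E lj2; rewrite /l' eqxx; case: eqP => [->|_] E.
    by rewrite li0 eqxx.
  by rewrite E eqxx.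
have aE : a = al *: p i by apply/eqP; rewrite -subr_eq0 -/v v0.
have r0 : 0 <= rho' by have := hcirc i; move=> <-; exact: enorm_ge0.
have h1 := hc j1 j1i.
rewrite aE dotBl !dotBr !dotZl !dotZr pp G (G j1) (negbTE j1i) eq_sym (negbTE j1i) in h1.
rewrite aE !dotDl !dotDr !dotZl !dotZr pp in hci.
have naE : enorm (al *: p i) = `|al|.
  by rewrite enormE dotZl dotZr pp mulr1 -expr2 sqrtr_sqr.
rewrite aE naE.
rewrite !mul0r !addr0 pp !mulr1 in h1.
have E : -2*al*g + 1 = 2*al*rho + rho^+2 by rewrite -[rho ^+ 2]/(rho * rho); lra.
have L : al * (2*D*rho - 2) = D - D*rho^+2.
  apply/eqP; rewrite -subr_eq0.
  have -> : al * (2*D*rho - 2) - (D - D*rho^+2) =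
     D * (2*al*rho + rho^+2 - (-2*al*g + 1)) - 2*al*(1 + D*g) by ring.
  by rewrite E subrr mulr0 Dg mulr0 subr0.
have rho40 : 40 <= rho by lra.
have Drho : 2 * rho <= D * rho by rewrite ler_pM2r //; lra.
have K0 : 0 < D * rho - 1 by lra.
have rr : 1 < rho ^+ 2 by nra.
have al0 : al < 0.
  have : al * (2 * (D * rho - 1)) < 0.
    have -> : al * (2 * (D * rho - 1)) = D - D * rho^+2 by rewrite -L; ring.
    nra.
  by rewrite pmulr_llt0 //; lra.
have alr : 0 < al + rho.
  have : 0 < (al + rho) * (2 * (D * rho - 1)).
    have -> : (al + rho) * (2 * (D * rho - 1)) = D - D * rho^+2 + rho * (2 * (D * rho - 1)).
      by rewrite -L; ring.
    nra.
  by rewrite pmulr_lgt0 //; lra.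
have rE : rho' = al + rho.
  apply/eqP; rewrite -(eqrXn2 (_ : (0 < 2)%N)) //; last exact: ltW.
  by rewrite -hci; apply/eqP; ring.
rewrite rE ltr0_norm //.
have M : (- al - (al + rho)) * (D * rho - 1) = rho - D.
  have -> : (- al - (al + rho)) * (D * rho - 1) = - (al * (2*D*rho - 2)) - rho * (D * rho - 1) by ring.
  rewrite L; ring.
rewrite -div1r ltr_pdivrMr; last by lra.
rewrite mulrC.
set X := - al - (al + rho) in M *.
have : 0 < (10 * D * X - 1) * (D * rho - 1).
  have -> : (10 * D * X - 1) * (D * rho - 1) = 10 * D * (rho - D) - (D * rho - 1) by rewrite -M; ring.
  nra.
rewrite pmulr_lgt0 //; lra.
Qed.
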